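(* Let $G=(V,E,w)$ be an edge-weighted graph with positive rational weights, no isolated vertices and maximum degree $\Delta$. The greedy algorithm applied to $U=V$ and the function $g(A)=h(A)+\frac1L f(A)$ returns a WPPITDS $S$ with $$|S|\le\Big(1+\ln\big(\tfrac32\cdot L\cdot W+\Delta\big)\Big)\cdot|S^*|,$$ where $S^*$ is a minimum-cardinality WPPITDS.
   Context: $N_A(v)=N(v)\cap A$, $W_A(v)=\sum_{u\in N_A(v)}w_{(v,u)}$, $W(v)=W_V(v)$, $W=\max_v W(v)$. $h(A)=\sum_{v\in V}h_A(v)$ with $h_A(v)=W(v)/2$ if $v\in A$ or $W_A(v)\ge W(v)/2$, and $h_A(v)=W_A(v)$ otherwise. $f(A)=\sum_{v\in V}\delta_A(v)$ with $\delta_A(v)=1$ if $|N_A(v)|>0$ and $0$ otherwise. For $v$ with incident edge weights $w_1,\dots,w_d$, write $w_0=W(v)/2$ and each $w_i$ as a reduced fraction $p_i/q_i$; $l(v)=\mathrm{lcm}\{q_0,\dots,q_d\}$, $L=\max_v l(v)$. The greedy algorithm: start with $S=\emptyset$; while some $u\in V\setminus S$ has $g(S\cup\{u\})-g(S)>0$, add to $S$ an element maximizing this increment (ties arbitrary); return $S$. A WPPITDS is a set $S\subseteq V$ such that every $v\in V\setminus S$ satisfies $W_S(v)\ge W(v)/2$ and every vertex of $S$ has at least one neighbor in $S$. *)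

(* Defs.v *)
From HB Require Import structures.
From mathcomp Require Import all_boot all_order all_algebra.
From mathcomp Require Import reals exp.
Set Implicit Arguments. Unset Strict Implicit. Unset Printing Implicit Defensive.
Import Order.TTheory GRing.Theory Num.Theory.
Local Open Scope ring_scope.

Section WPPITDS.
Variables (V : finType) (adj : rel V) (w : V -> V -> rat).

Definition nbhA (A : {set V}) (v : V) : {set V} := [set u in A | adj v u].
Definition WA (A : {set V}) (v : V) : rat := \sum_(u in nbhA A v) w v u.
Definition Wv (v : V) : rat := WA [set: V] v.
Definition Wmax : rat := \big[Num.max/0]_(v : V) Wv v.
Definition Delta : nat := \max_(v : V) #|nbhA [set: V] v|.

Definition hA (A : {set V}) (v : V) : rat :=
  if (v \in A) || (Wv v / 2%:R <= WA A v) then Wv v / 2%:R else WA A v.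
Definition h (A : {set V}) : rat := \sum_(v : V) hA A v.
Definition f (A : {set V}) : nat := \sum_(v : V) (nbhA A v != set0 : nat).

Definition den (x : rat) : nat := `|denq x|%N.
Definition lv (v : V) : nat :=
  lcmn (den (Wv v / 2%:R)) (\big[lcmn/1%N]_(u in nbhA [set: V] v) den (w v u)).
Definition Lmax : nat := \max_(v : V) lv v.

Definition g (A : {set V}) : rat := h A + (f A)%:R / (Lmax)%:R.

Definition gain (S : {set V}) (u : V) : rat := g (u |: S) - g S.

(* Possible states of the greedy algorithm (ties broken arbitrarily). *)
Inductive greedy_reach : {set V} -> Prop :=
| greedy_start : greedy_reach set0
| greedy_step (S : {set V}) (u : V) :
    greedy_reach S -> u \notin S -> 0 < gain S u ->
    (forall u', u' \notin S -> gain S u' <= gain S u) ->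
    greedy_reach (u |: S).

Definition greedy_output (S : {set V}) : Prop :=
  greedy_reach S /\ forall u, u \notin S -> ~ (0 < gain S u).

Definition is_WPPITDS (S : {set V}) : Prop :=
  (forall v, v \notin S -> Wv v / 2%:R <= WA S v) /\
  (forall v, v \in S -> nbhA S v != set0).

Definition min_WPPITDS (S : {set V}) : Prop :=
  is_WPPITDS S /\ forall T, is_WPPITDS T -> (#|S| <= #|T|)%N.

End WPPITDS.

(* Main.v *)
Require Import Defs.
From HB Require Import structures.
From mathcomp Require Import all_boot all_order all_algebra.
From mathcomp Require Import reals exp.
From mathcomp Require Import ring lra zify.
Import Order.TTheory GRing.Theory Num.Theory.
Local Open Scope ring_scope.

Lemma min_le2 (c y y' : rat) : y <= y' -> Num.min c y <= Num.min c y'.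
Proof. rewrite /Num.min /Order.min; case: ifP; case: ifP; lra. Qed.

Lemma min_sub (c x y a : rat) : x <= y -> 0 <= a ->
  Num.min c (y + a) - Num.min c y <= Num.min c (x + a) - Num.min c x.
Proof. rewrite /Num.min /Order.min; do 4 case: ifP; lra. Qed.

Lemma ln_ge1V {R : realType} {y : R} : 0 < y -> 1 - y^-1 <= ln y.
Proof.
move=> y0.
have := @le_ln1Dx R (y^-1 - 1).
have -> : 1 + (y^-1 - 1) = y^-1 by ring.
rewrite lnV ?posrE // => H.
have : -1 < y^-1 - 1 by rewrite ltrBrDr addNr invr_gt0.
move/H; lra.
Qed.

Definition Phi {R : realType} (m r : R) := if r <= m then r else m * (1 + ln (r / m)).

Lemma PhiL {R : realType} {m r : R} : r <= m -> Phi m r = r.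
Proof. by rewrite /Phi => ->. Qed.
Lemma PhiG {R : realType} {m r : R} : ~~ (r <= m) -> Phi m r = m * (1 + ln (r / m)).
Proof. by rewrite /Phi => /negbTE ->. Qed.

Lemma Phi_step (R : realType) (m r r' : R) : 0 < m -> 1 <= r - r' -> r <= m * (r - r') ->
  Phi m r' + 1 <= Phi m r.
Proof.
move=> m0 h1 h2.
have [hr|hr] := boolP (r <= m).
  have hr' : r' <= m by lra.
  rewrite (PhiL hr) (PhiL hr'). lra.
rewrite (PhiG hr).
have [hr'|hr'] := boolP (r' <= m); rewrite ?(PhiG hr') ?(PhiL hr').
- rewrite -ltNge in hr.
  have r0 : 0 < r by lra.
  have := ln_ge1V (divr_gt0 r0 m0); rewrite invf_div => hl.
  (* m + m ln(r/m) >= m + m(1 - m/r) ; need >= r' + 1 *)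
  have e : m * (1 - m / r) = (r - m) * (m / r).
    by field; lra.
  have hx : (m - r') * (m / r) <= m - r'.
    rewrite -[X in _ <= X]mulr1; apply: ler_wpM2l; first lra.
    by rewrite ler_pdivrMr // mul1r; lra.
  have hy : 1 <= (r - r') * (m / r).
    by rewrite mulrA ler_pdivlMr // mul1r mulrC.
  have hz : m * (1 - m / r) <= m * ln (r / m) by apply: ler_wpM2l; lra.
  have : (r - r') * (m / r) = (m - r') * (m / r) + (r - m) * (m / r) by ring.
  lra.
- rewrite -ltNge in hr hr'.
  have r0 : 0 < r by lra.
  have r'0 : 0 < r' by lra.
  have e : ln (r / m) = ln (r' / m) + ln (r / r').
    rewrite -lnM ?posrE ?divr_gt0 //; congr ln; field; lra.
  have := ln_ge1V (divr_gt0 r0 r'0); rewrite invf_div => hl.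
  have hy : 1 <= m * (1 - r' / r).
    have -> : m * (1 - r' / r) = m * (r - r') / r by field; lra.
    by rewrite ler_pdivlMr // mul1r.
  have hz : m * (1 - r' / r) <= m * ln (r / r') by apply: ler_wpM2l; lra.
  rewrite e; lra.
Qed.

Definition isl (l : nat) (q : rat) := exists z : int, q * l%:R = z%:~R.

Lemma isl0 l : isl l 0. Proof. by exists 0; rewrite mul0r. Qed.
Lemma islD l x y : isl l x -> isl l y -> isl l (x + y).
Proof. by move=> [a ha] [b hb]; exists (a + b); rewrite mulrDl ha hb rmorphD. Qed.
Lemma islB l x y : isl l x -> isl l y -> isl l (x - y).
Proof. by move=> [a ha] [b hb]; exists (a - b); rewrite mulrBl ha hb rmorphB. Qed.
Lemma isl_sum l (I : finType) (P : pred I) (F : I -> rat) :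
  (forall i, P i -> isl l (F i)) -> isl l (\sum_(i | P i) F i).
Proof. move=> h; elim/big_ind: _ => //; [exact: isl0 | exact: islD]. Qed.
Lemma isl_gran l x : (0 < l)%N -> isl l x -> 0 < x -> l%:R^-1 <= x.
Proof.
move=> l0 [z hz] x0.
have lR : 0 < (l%:R : rat) by rewrite ltr0n.
have : 0 < z%:~R :> rat by rewrite -hz mulr_gt0.
rewrite ltr0z => z0.
have z1 : 1 <= z%:~R :> rat by rewrite ler1z; lia.
rewrite -[X in X <= _]mul1r ler_pdivrMr // hz //.
Qed.
Lemma isl_den l x : (den x %| l)%N -> isl l x.
Proof.
move=> /dvdnP [k hk].
exists (numq x * k%:Z).
rewrite hk natrM rmorphM /= numqE.
have hd : denq x = (den x)%:Z by rewrite /den abszE gtr0_norm ?denq_gt0.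
rewrite hd -[X in _ = _ * X]pmulrn /=. 
ring.
Qed.

Section Main.
Variables (V : finType) (adj : rel V) (w : V -> V -> rat).
Hypotheses (adj_sym : symmetric adj) (adj_irr : irreflexive adj)
  (w_sym : forall u v, w u v = w v u)
  (w_pos : forall u v, adj u v -> 0 < w u v)
  (no_isolated : forall v, exists u, adj v u).

Definition phi (c : rat) (a : V -> rat) (A : {set V}) := Num.min c (\sum_(u in A) a u).

Lemma sum_mono (a : V -> rat) (A B : {set V}) : (forall u, 0 <= a u) -> A \subset B ->
  \sum_(u in A) a u <= \sum_(u in B) a u.
Proof.
move=> a0 /subsetP sAB; rewrite [X in X <= _]big_mkcond [X in _ <= X]big_mkcond.
apply: ler_sum => u _; case: ifP => uA; first by rewrite sAB.
by case: ifP.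
Qed.

Lemma sum_ge0 (a : V -> rat) (A : {set V}) : (forall u, 0 <= a u) -> 0 <= \sum_(u in A) a u.
Proof. by move=> a0; apply: sumr_ge0. Qed.

Lemma phi_mono c a (A B : {set V}) : (forall u, 0 <= a u) -> A \subset B -> phi c a A <= phi c a B.
Proof. by move=> a0 sAB; apply: min_le2; apply: sum_mono. Qed.

Lemma phi_sub c a (A B : {set V}) u : (forall u, 0 <= a u) -> A \subset B ->
  phi c a (u |: B) - phi c a B <= phi c a (u |: A) - phi c a A.
Proof.
move=> a0 sAB.
have [uB|uB] := boolP (u \in B).
  rewrite (setUidPr _); last by rewrite sub1set.
  rewrite subrr subr_ge0; apply: phi_mono => //; exact: subsetUr.
have uA : u \notin A by apply: contra uB; apply: (subsetP sAB).
rewrite /phi !big_setU1 //= ![a u + _]addrC.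
by apply: min_sub => //; apply: sum_mono.
Qed.

Lemma phi_gran c a (A B : {set V}) l : (forall u, 0 <= a u) -> (0 < l)%N -> isl l c -> (forall u, isl l (a u)) ->
  0 < phi c a B - phi c a A -> l%:R^-1 <= phi c a B - phi c a A.
Proof.
move=> a0 l0 hc ha; apply: isl_gran => //.
have hp : forall X, isl l (phi c a X).
  move=> X; rewrite /phi /Num.min /Order.min; case: ifP => _ //.
  exact: isl_sum.
exact: islB.
Qed.

Lemma phi_ge0 c a (A : {set V}) : 0 <= c -> (forall u, 0 <= a u) -> 0 <= phi c a A.
Proof. move=> c0 a0; rewrite /phi /Num.min /Order.min; case: ifP => // _; exact: sum_ge0. Qed.

Lemma phi_le c a (A : {set V}) : phi c a A <= \sum_(u in A) a u.
Proof. rewrite /phi /Num.min /Order.min; case: ifP => //; lra. Qed.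

Lemma phi_inc c a (A : {set V}) u : (forall u, 0 <= a u) -> u \notin A -> 0 < a u ->
  phi c a A < c -> phi c a A < phi c a (u |: A).
Proof.
move=> a0 uA au; rewrite /phi big_setU1 //= /Num.min /Order.min.
do 2 case: ifP; lra.
Qed.

Definition ew v u : rat := if adj v u then w v u else 0.
Lemma ew_ge0 v u : 0 <= ew v u.
Proof. rewrite /ew; case: ifP => // h; apply: ltW; exact: w_pos. Qed.

Lemma WAE (A : {set V}) v : WA adj w A v = \sum_(u in A) ew v u.
Proof.
rewrite /WA /nbhA big_mkcond [RHS]big_mkcond; apply: eq_bigr => u _.
by rewrite inE /ew; case: (u \in A); case: (adj v u).
Qed.

Lemma Wv_ge0 v : 0 <= Wv adj w v.
Proof. rewrite /Wv WAE; apply: sum_ge0; exact: ew_ge0. Qed.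

Definition cv v := Wv adj w v / 2%:R.
Definition ah v u := ew v u + (u == v)%:R * cv v.
Lemma ah_ge0 v u : 0 <= ah v u.
Proof.
rewrite /ah; apply: addr_ge0; first exact: ew_ge0.
apply: mulr_ge0; first by case: (u == v).
by rewrite /cv divr_ge0 // Wv_ge0.
Qed.

Lemma hAE (A : {set V}) v : hA adj w A v = phi (cv v) (ah v) A.
Proof.
have c0 : 0 <= cv v by rewrite /cv divr_ge0 // Wv_ge0.
have s0 : 0 <= WA adj w A v by rewrite WAE; apply: sum_ge0; exact: ew_ge0.
rewrite /hA /phi /ah big_split /= -WAE -/(cv v).
have [vA|vA] := boolP (v \in A).
  rewrite (bigD1 v) //= eqxx mul1r big1 ?addr0; last first.
    by move=> u /andP [_ /negbTE ->]; rewrite mul0r.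
  rewrite /Num.min /Order.min; case: ifP; lra.
rewrite big1 ?addr0; last first.
  move=> u uA; have -> : (u == v) = false by apply/eqP => e; rewrite -e uA in vA.
  by rewrite mul0r.
rewrite /= /Num.min /Order.min -/(cv v); case: ifP; case: ifP; lra.
Qed.

Definition ad v u : rat := (adj v u)%:R.
Lemma ad_ge0 v u : 0 <= ad v u. Proof. by rewrite /ad; case: adj. Qed.

Lemma psiE (A : {set V}) v : ((nbhA adj A v != set0) : nat)%:R = phi 1 (ad v) A.
Proof.
rewrite /phi.
case: (set_0Vmem (nbhA adj A v)) => [e|[u]].
  rewrite e eqxx /= big1; first by rewrite /Num.min /Order.min ltr10.
  move=> u uA; rewrite /ad; case avu: (adj v u) => //.
  have : u \in nbhA adj A v by rewrite inE uA avu.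
  by rewrite e inE.
rewrite inE => /andP [uA avu].
have : 1 <= \sum_(x in A) ad v x.
  rewrite (bigD1 u) //= /ad avu (_ : ((true : nat)%:R : rat) = 1) //.
  have : 0 <= \sum_(i in A | i != u) (adj v i)%:R :> rat by apply: sumr_ge0 => *; case: adj.
  lra.
have -> : (nbhA adj A v != set0) = true.
  by apply/set0Pn; exists u; rewrite inE uA.
rewrite (_ : ((true : nat)%:R : rat) = 1) // /Num.min /Order.min; case: ifP; lra.
Qed.

Notation L := ((Lmax adj w)%:R : rat).
Definition phv v (A : {set V}) := phi (cv v) (ah v) A.
Definition psv v (A : {set V}) := phi 1 (ad v) A.

Lemma gE (A : {set V}) : g adj w A = \sum_v (phv v A + psv v A / L).
Proof.
rewrite /g /h /f natr_sum mulr_suml -big_split; apply: eq_bigr => v _.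
by rewrite hAE psiE.
Qed.

Lemma gainE (A : {set V}) u : gain adj w A u =
  \sum_v ((phv v (u |: A) - phv v A) + (psv v (u |: A) - psv v A) / L).
Proof. rewrite /gain !gE -sumrB; apply: eq_bigr => v _; ring. Qed.

Lemma L_ge0 : 0 <= L. Proof. exact: ler0n. Qed.

Lemma g_mono (A B : {set V}) : A \subset B -> g adj w A <= g adj w B.
Proof.
move=> sAB; rewrite !gE; apply: ler_sum => v _; apply: lerD.
  apply: phi_mono => //; exact: ah_ge0.
apply: ler_wpM2r; first by rewrite invr_ge0 L_ge0.
apply: phi_mono => //; exact: ad_ge0.
Qed.

Lemma gain_ge0 (A : {set V}) u : 0 <= gain adj w A u.
Proof. rewrite /gain subr_ge0; apply: g_mono; exact: subsetUr. Qed.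

Lemma g_sub (A B : {set V}) u : A \subset B -> gain adj w B u <= gain adj w A u.
Proof.
move=> sAB; rewrite !gainE; apply: ler_sum => v _; apply: lerD.
  apply: phi_sub => //; exact: ah_ge0.
apply: ler_wpM2r; first by rewrite invr_ge0 L_ge0.
apply: phi_sub => //; exact: ad_ge0.
Qed.

Lemma lv_gt0 v : (0 < lv adj w v)%N.
Proof.
rewrite /lv lcmn_gt0 /den absz_gt0 denq_neq0 /=.
elim/big_ind: _ => // [x y hx hy | x _]; first by rewrite lcmn_gt0 hx hy.
by rewrite /den absz_gt0 denq_neq0.
Qed.

Lemma lv_le v : (lv adj w v <= Lmax adj w)%N.
Proof. by rewrite /Lmax (bigD1 v) //= leq_maxl. Qed.

Lemma isl_cv v : isl (lv adj w v) (cv v).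
Proof. apply: isl_den; exact: dvdn_lcml. Qed.

Lemma isl_ah v u : isl (lv adj w v) (ah v u).
Proof.
rewrite /ah; apply: islD.
  rewrite /ew; case: ifP => h; last exact: isl0.
  apply: isl_den; apply: dvdn_trans (dvdn_lcmr _ _).
  by apply: (biglcmn_sup u) => //; rewrite inE in_setT h.
case: (u == v); last by rewrite mul0r; exact: isl0.
by rewrite mul1r; exact: isl_cv.
Qed.

Lemma gain_gran (A : {set V}) u : 0 < gain adj w A u -> L^-1 <= gain adj w A u.
Proof.
move=> hg.
set dp := fun v => phv v (u |: A) - phv v A.
set ds := fun v => psv v (u |: A) - psv v A.
have dp0 : forall v, 0 <= dp v.
  move=> v; rewrite /dp subr_ge0; apply: phi_mono; [exact: ah_ge0| exact: subsetUr].
have ds0 : forall v, 0 <= ds v.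
  move=> v; rewrite /ds subr_ge0; apply: phi_mono; [exact: ad_ge0| exact: subsetUr].
have hge : gain adj w A u = \sum_v (dp v + ds v / L) by rewrite gainE.
case: (pickP (fun v => (0 < dp v) || (0 < ds v))) => [v /orP hv|hn]; last first.
  exfalso; move: hg; rewrite hge ltNge => /negP; apply.
  apply: sumr_le0 => v _; move: (hn v) => /= /norP [].
  rewrite -!leNgt => h1 h2.
  have : ds v / L <= 0 by apply: mulr_le0_ge0 => //; rewrite invr_ge0 L_ge0.
  lra.
have hterm : dp v + ds v / L <= gain adj w A u.
  rewrite hge (bigD1 v) //= lerDl; apply: sumr_ge0 => x _.
  apply: addr_ge0 => //; apply: divr_ge0 => //; exact: L_ge0.
have Lp : 0 < L by rewrite ltr0n; apply: leq_trans (lv_gt0 v) (lv_le v).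
have hds : 0 <= ds v / L by apply: divr_ge0 => //; exact: ltW.
case: hv => h.
- have := phi_gran _ _ A (u |: A) _ (ah_ge0 v) (lv_gt0 v) (isl_cv v) (isl_ah v) h.
  move=> hp; have hp' : (lv adj w v)%:R^-1 <= dp v := hp.
  have : L^-1 <= (lv adj w v)%:R^-1.
    by rewrite lef_pV2 ?posrE ?ltr0n ?lv_gt0 ?(leq_trans (lv_gt0 v) (lv_le v)) // ler_nat lv_le.
  lra.
- have h1 : isl 1 1 by exists 1; rewrite mulr1.
  have h2 : forall u, isl 1 (ad v u) by move=> x; exists (adj v x)%:Z; rewrite mulr1 /ad; case: adj.
  have := phi_gran _ _ A (u |: A) _ (ad_ge0 v) (isT : (0 < 1)%N) h1 h2 h.
  rewrite invr1 => hp; have hd1 : 1 <= ds v := hp.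
  have : L^-1 <= ds v / L by rewrite -[X in X <= _]mul1r; apply: ler_wpM2r => //; rewrite invr_ge0 L_ge0.
  have := dp0 v. lra.
Qed.

Lemma gain_pos (A : {set V}) u v :
  0 < phv v (u |: A) - phv v A \/ 0 < psv v (u |: A) - psv v A -> 0 < gain adj w A u.
Proof.
move=> h; rewrite gainE (bigD1 v) //=.
have r0 : 0 <= \sum_(i | i != v) ((phv i (u |: A) - phv i A) + (psv i (u |: A) - psv i A) / L).
  apply: sumr_ge0 => x _; apply: addr_ge0.
    rewrite subr_ge0; apply: phi_mono; [exact: ah_ge0| exact: subsetUr].
  apply: divr_ge0; last exact: L_ge0.
  rewrite subr_ge0; apply: phi_mono; [exact: ad_ge0| exact: subsetUr].
have d1 : 0 <= phv v (u |: A) - phv v A.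
  rewrite subr_ge0; apply: phi_mono; [exact: ah_ge0| exact: subsetUr].
have d2 : 0 <= psv v (u |: A) - psv v A.
  rewrite subr_ge0; apply: phi_mono; [exact: ad_ge0| exact: subsetUr].
case: h => h.
  have : 0 <= (psv v (u |: A) - psv v A) / L by apply: divr_ge0 => //; exact: L_ge0.
  lra.
have Lp : 0 < L.
  rewrite ltr0n; apply: leq_trans (lv_gt0 v) (lv_le v).
have : 0 < (psv v (u |: A) - psv v A) / L by apply: divr_gt0.
lra.
Qed.

Lemma Wv_gt0 v : 0 < Wv adj w v.
Proof.
have [u hu] := no_isolated v.
rewrite /Wv WAE (bigD1 u) //=.
have : 0 <= \sum_(i in [set: V] | i != u) ew v i by apply: sumr_ge0 => *; exact: ew_ge0.
have : 0 < ew v u by rewrite /ew hu w_pos.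
lra.
Qed.

Lemma out_wppitds (S : {set V}) : greedy_output adj w S -> is_WPPITDS adj w S.
Proof.
move=> [_ hout]; split.
  move=> v vS; apply/negPn/negP => hc.
  have hphv : phv v S = WA adj w S v.
    by rewrite /phv -hAE /hA (negbTE vS) (negbTE hc).
  have hlt : WA adj w S v < cv v by rewrite ltNge.
  case: (pickP (fun u => adj v u && (u \notin S))) => [u /andP [avu uS]|hn].
    apply: (hout u uS); apply: (gain_pos _ _ v); left.
    rewrite subr_gt0; apply: phi_inc => //; first exact: ah_ge0.
      rewrite /ah /ew avu.
      have : 0 <= (u == v)%:R * cv v.
        apply: mulr_ge0; first by case: (u == v).
        by rewrite /cv divr_ge0 // Wv_ge0.
      have := w_pos _ _ avu; lra.
    by move: hlt; rewrite -hphv.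
  have e : nbhA adj S v = nbhA adj [set: V] v.
    apply/setP => u; rewrite !inE; move: (hn u) => /=.
    by case: (adj v u); case: (u \in S).
  move: hlt; rewrite /WA e -/(WA adj w [set: V] v) -/(Wv adj w v) /cv.
  have := Wv_ge0 v; lra.
move=> v vS; apply/negP => /eqP e.
have [u hu] := no_isolated v.
have uS : u \notin S.
  apply/negP => uS.
  have : u \in nbhA adj S v by rewrite inE uS hu.
  by rewrite e inE.
apply: (hout u uS); apply: (gain_pos _ _ v); right.
have hps : psv v S = 0 by rewrite /psv -psiE e eqxx.
rewrite subr_gt0 /psv; apply: (phi_inc _ _ _ _ (ad_ge0 v) uS).
  by rewrite /ad hu ltr01.
by rewrite -/(psv v S) hps ltr01.
Qed.

Lemma wppitds_g (T : {set V}) : is_WPPITDS adj w T -> g adj w T = g adj w [set: V].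
Proof.
move=> [h1 h2].
rewrite /g /h /f.
have eh : forall (X : {set V}) v, (forall v, v \notin X -> cv v <= WA adj w X v) -> hA adj w X v = cv v.
  move=> X v hX; rewrite /hA; case: ifP => // /norP [vX /negP]; by case; apply: hX.
rewrite (eq_bigr (fun v => cv v)); last by move=> v _; apply: eh.
rewrite [in RHS](eq_bigr (fun v => cv v)); last by move=> v _; apply: eh => x; rewrite in_setT.
congr (_ + (_ / _)); congr (_%:R).
apply: eq_bigr => v _.
have ne : forall X : {set V}, (0 < WA adj w X v) -> nbhA adj X v != set0.
  move=> X; apply: contraTneq => e; rewrite /WA e big_set0 ltxx //.
have -> : nbhA adj [set: V] v != set0.
  by apply: ne; rewrite -/(Wv adj w v) Wv_gt0.
have [vT|vT] := boolP (v \in T); first by rewrite h2.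
rewrite ne //; apply: lt_le_trans (h1 v vT).
by rewrite /cv divr_gt0 ?Wv_gt0.
Qed.

Lemma gunion (T : {set V}) (s : seq V) :
  g adj w (T :|: [set x in s]) - g adj w T <= \sum_(x <- s) gain adj w T x.
Proof.
elim: s => [|a s IH].
  rewrite big_nil.
  have -> : [set x in [::]] = set0 :> {set V} by apply/setP => x; rewrite !inE.
  by rewrite setU0 subrr.
rewrite big_cons.
have -> : T :|: [set x in a :: s] = a |: (T :|: [set x in s]).
  by apply/setP => x; rewrite !inE; case: (x == a); case: (x \in T).
have := g_sub _ _ a (subsetUl T [set x in s]).
rewrite /gain; lra.
Qed.

Lemma g_ge0 (A : {set V}) : 0 <= g adj w A.
Proof.
rewrite gE; apply: sumr_ge0 => v _; apply: addr_ge0.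
  apply: phi_ge0; [by rewrite /cv divr_ge0 // Wv_ge0 | exact: ah_ge0].
apply: divr_ge0; last exact: L_ge0.
apply: phi_ge0; [exact: ler01 | exact: ad_ge0].
Qed.

Lemma bigmax_seq (F : V -> rat) (s : seq V) x : x \in s -> F x <= \big[Num.max/0]_(v <- s) F v.
Proof.
elim: s => // a s IH; rewrite inE big_cons => /orP [/eqP ->|/IH h].
  rewrite /Num.max /Order.max; case: ifP; lra.
move: h; rewrite /Num.max /Order.max; case: ifP; lra.
Qed.

Lemma Wv_le (x : V) : Wv adj w x <= Wmax adj w.
Proof. rewrite /Wmax; apply: bigmax_seq; exact: mem_index_enum. Qed.

Lemma nbh1 (x v : V) : (nbhA adj [set x] v != set0) = adj x v.
Proof.
rewrite adj_sym.
case avx: (adj v x).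
  by apply/set0Pn; exists x; rewrite inE set11 avx.
apply/negbTE; rewrite negbK; apply/eqP/setP => u; rewrite !inE.
by case: (u =P x) => // ->; rewrite avx.
Qed.

Lemma f1 (x : V) : (f adj [set x] <= Delta adj)%N.
Proof.
have -> : f adj [set x] = #|nbhA adj [set: V] x|.
  rewrite /f -sum1_card [in RHS]big_mkcond /=; apply: eq_bigr => v _.
  by rewrite nbh1 inE in_setT; case: adj.
by rewrite /Delta (bigD1 x) //= leq_maxl.
Qed.

Lemma h1 (x : V) : h adj w [set x] <= 3%:R / 2%:R * Wv adj w x.
Proof.
rewrite /h.
have hb : forall v, hA adj w [set x] v <= ew v x + (x == v)%:R * cv v.
  move=> v; rewrite hAE; apply: le_trans (phi_le _ _ _) _.
  by rewrite big_set1.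
apply: le_trans (ler_sum _ (fun v _ => hb v)) _.
rewrite big_split /=.
have -> : \sum_v ew v x = Wv adj w x.
  rewrite /Wv WAE [RHS]big_mkcond; apply: eq_bigr => v _.
  by rewrite in_setT /ew adj_sym w_sym.
rewrite (bigD1 x) //= eqxx mul1r big1; last first.
  by move=> v /negbTE; rewrite eq_sym => ->; rewrite mul0r.
rewrite /cv; lra.
Qed.

Lemma single (x : V) : L * gain adj w set0 x <= 3%:R / 2%:R * L * Wmax adj w + (Delta adj)%:R.
Proof.
have g0 := g_ge0 set0.
have e : x |: set0 = [set x] by rewrite setU0.
rewrite /gain e.
have hL : L * ((f adj [set x])%:R / L) <= (Delta adj)%:R.
  have [L0|L0] := eqVneq L 0.
    by rewrite L0 mul0r ler0n.
  by rewrite mulrCA divff // mulr1 ler_nat f1.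
have hh : L * h adj w [set x] <= 3%:R / 2%:R * L * Wmax adj w.
  have := h1 x; have := Wv_le x; have := L_ge0; have := Wv_ge0 x; nra.
have : L * g adj w set0 >= 0 by apply: mulr_ge0 => //; exact: L_ge0.
rewrite /g in hL *. rewrite /g.
have -> : L * (h adj w [set x] + (f adj [set x])%:R / L - (h adj w set0 + (f adj set0)%:R / L))
  = L * h adj w [set x] + L * ((f adj [set x])%:R / L) - L * (h adj w set0 + (f adj set0)%:R / L) by ring.
lra.
Qed.

Lemma gain_in (T : {set V}) x : x \in T -> gain adj w T x = 0.
Proof. by move=> xT; rewrite /gain (setUidPr _) ?subrr // sub1set. Qed.

Lemma union_bound (T Ss : {set V}) (c : rat) :
  is_WPPITDS adj w Ss -> (forall x, x \in Ss -> gain adj w T x <= c) ->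
  g adj w [set: V] - g adj w T <= #|Ss|%:R * c.
Proof.
move=> hS hc.
have e : g adj w (T :|: [set x in enum Ss]) = g adj w [set: V].
  apply/eqP; rewrite eq_le; apply/andP; split; first by apply: g_mono; exact: subsetT.
  rewrite -(wppitds_g _ hS) set_enum; apply: g_mono; exact: subsetUr.
have := gunion T (enum Ss); rewrite e big_enum /= => h.
apply: le_trans h _.
rewrite mulr_natl -sumr_const; apply: ler_sum => x xS; exact: hc.
Qed.

Lemma main_in (R : realType) (S Sstar : {set V}) :
  greedy_output adj w S -> min_WPPITDS adj w Sstar ->
  is_WPPITDS adj w S /\
  (#|S|%:R : R) <=
    (1 + ln (ratr (3%:R / 2%:R * (Lmax adj w)%:R * Wmax adj w)
             + (Delta adj)%:R)) * #|Sstar|%:R.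
Proof.
move=> hout [hstar hmin].
have hS := out_wppitds _ hout.
split => //.
have [m0|mpos] := posnP #|Sstar|.
  have -> : #|S| = 0%N.
    apply/eqP; rewrite cards_eq0; apply/eqP/setP => v; exfalso.
    move: m0 => /eqP; rewrite cards_eq0 => /eqP e.
    have := hstar.1 v; rewrite e inE => /(_ isT).
    rewrite /WA.
    have -> : nbhA adj set0 v = set0 by apply/setP => u; rewrite !inE.
    rewrite big_set0 -/(cv v) => h0.
    have : 0 < cv v by rewrite /cv divr_gt0 ?Wv_gt0.
    lra.
  by rewrite m0 !mulr0.
set mR : R := #|Sstar|%:R.
have mR0 : 0 < mR by rewrite /mR ltr0n.
set r := fun T : {set V} => (ratr (L * (g adj w [set: V] - g adj w T)) : R).
have key : forall T, greedy_reach adj w T -> (#|T|%:R : R) <= Phi mR (r set0) - Phi mR (r T).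
  move=> T; elim => [|T0 u hT IH uT hpos hmax].
    by rewrite cards0 subrr.
  rewrite cardsU1 uT natrD.
  have Lp : 0 < L by rewrite ltr0n; apply: leq_trans (lv_gt0 u) (lv_le u).
  have hd : r T0 - r (u |: T0) = ratr (L * gain adj w T0 u).
    by rewrite /r -rmorphB /gain; congr ratr; ring.
  have h1 : 1 <= L * gain adj w T0 u.
    have := gain_gran _ _ hpos.
    by rewrite -[X in X <= _ -> _]mul1r ler_pdivrMr // mulrC.
  have h2 : L * (g adj w [set: V] - g adj w T0) <= #|Sstar|%:R * (L * gain adj w T0 u).
    rewrite mulrCA; apply: ler_wpM2l; first exact: ltW.
    apply: union_bound => // x xS.
    have [xT|xT] := boolP (x \in T0); last exact: hmax.
    by rewrite gain_in //; exact: ltW.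
  have p1 : (1 : R) <= r T0 - r (u |: T0).
    by rewrite hd -[1 : R](rmorph1 (@ratr R)) ler_rat.
  have p2 : r T0 <= mR * (r T0 - r (u |: T0)).
    by rewrite hd /r /mR -[(#|Sstar|%:R : R)]ratr_nat -rmorphM ler_rat.
  have := @Phi_step R mR (r T0) (r (u |: T0)) mR0 p1 p2.
  rewrite (_ : ((true : nat)%:R : R) = 1) //.
  lra.
have := key S hout.1.
have -> : r S = 0.
  by rewrite /r (wppitds_g _ hS) subrr mulr0 rmorph0.
rewrite (PhiL (ltW mR0)) subr0 => hk.
apply: le_trans hk _.
set B := ratr (3%:R / 2%:R * L * Wmax adj w) + (Delta adj)%:R : R.
have [x xS] : exists x, x \in Sstar by apply/set0Pn; rewrite -card_gt0.
have B1 : 1 <= B.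
  have hD : (1 <= Delta adj)%N.
    have [u hu] := no_isolated x.
    apply: leq_trans (_ : (#|nbhA adj [set: V] x| <= _)%N).
      by apply/card_gt0P; exists u; rewrite inE in_setT hu.
    by rewrite /Delta (bigD1 x) //= leq_maxl.
  have hW : 0 <= ratr (3%:R / 2%:R * L * Wmax adj w) :> R.
    rewrite -(rmorph0 (ratr : {rmorphism rat -> R})) ler_rat.
    apply: mulr_ge0; first by apply: mulr_ge0 => //; exact: L_ge0.
    exact: le_trans (Wv_ge0 x) (Wv_le x).
  have : (1 : R) <= (Delta adj)%:R by rewrite ler1n.
  rewrite /B; lra.
have hr0 : r set0 <= mR * B.
  have := union_bound set0 _ (L^-1 * (3%:R / 2%:R * L * Wmax adj w + (Delta adj)%:R)) hstar.
  have Lp : 0 < L by rewrite ltr0n; apply: leq_trans (lv_gt0 x) (lv_le x).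
  have hs : forall y, y \in Sstar -> gain adj w set0 y <= L^-1 * (3%:R / 2%:R * L * Wmax adj w + (Delta adj)%:R).
    move=> y _; rewrite ler_pdivlMl //; exact: single.
  move=> /(_ hs) h.
  have : L * (g adj w [set: V] - g adj w set0) <= #|Sstar|%:R * (3%:R / 2%:R * L * Wmax adj w + (Delta adj)%:R).
    have := ler_wpM2l (ltW Lp) h.
    have e : forall a b c : rat, a != 0 -> a * (b * (a^-1 * c)) = b * c by move=> a b c a0; field.
    by rewrite e //; exact: lt0r_neq0.
  move=> h2; rewrite /r /B /mR -[(#|Sstar|%:R : R)]ratr_nat -[((Delta adj)%:R : R)]ratr_nat -rmorphD -rmorphM ler_rat //.
have Bp : 0 < B by lra.
rewrite mulrC.
have [hr|hr] := boolP (r set0 <= mR).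
  rewrite (PhiL hr).
  have : 0 <= ln B by apply: ln_ge0.
  nra.
rewrite (PhiG hr); rewrite -ltNge in hr.
apply: ler_wpM2l; first exact: ltW.
have r0p : 0 < r set0 by lra.
rewrite lerD2l ler_ln ?posrE ?(divr_gt0 r0p mR0) //.
by rewrite ler_pdivrMr // mulrC.
Qed.
End Main.

Theorem mainTheorem17 (R : realType) (V : finType) (adj : rel V)
  (w : V -> V -> rat)
  (adj_sym : symmetric adj) (adj_irr : irreflexive adj)
  (w_sym : forall u v, w u v = w v u)
  (w_pos : forall u v, adj u v -> 0 < w u v)
  (no_isolated : forall v, exists u, adj v u)
  (S Sstar : {set V}) :
  greedy_output adj w S -> min_WPPITDS adj w Sstar ->
  is_WPPITDS adj w S /\
  (#|S|%:R : R) <=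
    (1 + ln (ratr (3%:R / 2%:R * (Lmax adj w)%:R * Wmax adj w)
             + (Delta adj)%:R)) * #|Sstar|%:R.
Proof. by apply: main_in. Qed.
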